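(* Let $p$ be a prime and $n\ge1$. The Cantor–Bendixson rank of the space ${\rm Sub}(\mathcal{L}_{n,p})$ is equal to the Cantor–Bendixson rank of the poset $\mathcal{Q}$.
   Context: $\mathcal{L}_{n,p}=(\mathbb{Z}/p\mathbb{Z})^n\wr\mathbb{Z}$. ${\rm Sub}(G)$ is the compact space of subgroups of $G$ with topology induced from $\{0,1\}^G$; the Cantor–Bendixson rank of a Polish space $X$ is the least ordinal $\alpha$ with $X^\alpha=X^{\alpha+1}$, where $X^0=X$, $X^{\alpha+1}$ is the set of non-isolated points of $X^\alpha$, and $X^\lambda=\bigcap_{\alpha<\lambda}X^\alpha$ for limit $\lambda$. $\mathcal{Q}$ is the set $\mathbb{N}\times(\mathbb{N}\cup\{0\})$ with the relation $(t',r')<(t,r)$ iff $t'\mid t$ and $t'r'<tr$. For a set $\mathcal{P}$ with a transitive relation: $\mathcal{P}_0$ is the set of minimal elements, $\bar{\mathcal{P}}_0=\mathcal{P}\setminus\mathcal{P}_0$; $\mathcal{P}_{\alpha+1}$ is $\mathcal{P}_\alpha$ together with the minimal elements of $\bar{\mathcal{P}}_\alpha$, $\bar{\mathcal{P}}_{\alpha+1}=\mathcal{P}\setminus\mathcal{P}_{\alpha+1}$; at limits $\mathcal{P}_\beta=\bigcup_{\alpha<\beta}\mathcal{P}_\alpha$, $\bar{\mathcal{P}}_\beta=\bigcap_{\alpha<\beta}\bar{\mathcal{P}}_\alpha$; $r_{CB}(\mathcal{P})$ is the minimal $\alpha$ with $\bar{\mathcal{P}}_\alpha=\bar{\mathcal{P}}_{\alpha+1}$.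 *)

(* Defs.v *)
From Stdlib Require List.
From HB Require Import structures.
From mathcomp Require Import all_boot all_order all_algebra.
Set Implicit Arguments. Unset Strict Implicit. Unset Printing Implicit Defensive.
Import Order.TTheory GRing.Theory Num.Theory.

Inductive bord : Type :=
| OZ : bord
| OS : bord -> bord
| OL : (nat -> bord) -> bord.   (* OL f denotes sup_k (f k) *)

Inductive ole : bord -> bord -> Prop :=
| oleZ b : ole OZ b
| oleS a b : olt a b -> ole (OS a) b
| oleL f b : (forall k, ole (f k) b) -> ole (OL f) b
with olt : bord -> bord -> Prop :=
| oltS a b : ole a b -> olt a (OS b)
| oltL a f k : olt a (f k) -> olt a (OL f).

(* The lamplighter group L_{n,p} = (Z/pZ)^n wr Z.                      *)
(* Elements are pairs (f, m), f : Z -> (F_p)^n finitely supported,     *)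
(* m : Z; we work in the ambient type of all pairs and cut out L_{n,p} *)
(* by the finite-support predicate [inL].                              *)
(* (f,a)(g,b) = (f + shift_a g, a + b), (shift_a g)(k) = g (k - a).    *)
Definition lamp (p n : nat) : Type := ((int -> 'rV['F_p]_n) * int)%type.

Definition inL (p n : nat) (x : lamp p n) : Prop :=
  exists N : nat, forall k : int, (N < `|k|)%N -> x.1 k = 0%R.

Definition lone (p n : nat) : lamp p n := (fun _ => 0%R, 0%R).
Definition lmul (p n : nat) (x y : lamp p n) : lamp p n :=
  (fun k => (x.1 k + y.1 (k - x.2))%R, (x.2 + y.2)%R).
Definition linv (p n : nat) (x : lamp p n) : lamp p n :=
  (fun k => (- x.1 (k + x.2))%R, (- x.2)%R).

Definition is_subgroup (p n : nat) (H : lamp p n -> Prop) : Prop :=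
  (forall x, H x -> inL x) /\ H (lone p n) /\
  (forall x y, H x -> H y -> H (lmul x y)) /\
  (forall x, H x -> H (linv x)).

(* Cantor--Bendixson derivatives of a subspace S of {0,1}^G, where G   *)
(* is given as a predicate [dom] on an ambient type T.  The topology   *)
(* of {0,1}^G is the product topology, whose basic open sets are the   *)
(* cylinders fixing the values on a finite subset F of G; thus H is    *)
(* isolated in S iff some cylinder around H meets S only in H.         *)
Definition isolated_in (T : Type) (dom : T -> Prop)
    (S : (T -> Prop) -> Prop) (H : T -> Prop) : Prop :=
  S H /\ exists F : list T, (forall g, List.In g F -> dom g) /\
    forall K, S K -> (forall g, List.In g F -> (K g <-> H g)) -> K = H.

Definition cb_deriv (T : Type) (dom : T -> Prop) (S : (T -> Prop) -> Prop)
  : (T -> Prop) -> Prop := fun H => S H /\ ~ isolated_in dom S H.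

Fixpoint cb_iter (T : Type) (dom : T -> Prop) (X : (T -> Prop) -> Prop)
    (o : bord) : (T -> Prop) -> Prop :=
  match o with
  | OZ => X
  | OS a => cb_deriv dom (cb_iter dom X a)
  | OL f => fun H => forall k, cb_iter dom X (f k) H
  end.

Definition is_CB_rank_space (T : Type) (dom : T -> Prop)
    (X : (T -> Prop) -> Prop) (o : bord) : Prop :=
  cb_iter dom X o = cb_iter dom X (OS o) /\
  forall o', cb_iter dom X o' = cb_iter dom X (OS o') -> ole o o'.

Definition minimal_in (T : Type) (lt : T -> T -> Prop) (S : T -> Prop) :
  T -> Prop := fun x => S x /\ ~ (exists y, S y /\ lt y x).

Fixpoint P_iter (T : Type) (P : T -> Prop) (lt : T -> T -> Prop) (o : bord) :
  T -> Prop :=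
  match o with
  | OZ => minimal_in lt P
  | OS a => fun x => P_iter P lt a x \/
              minimal_in lt (fun y => P y /\ ~ P_iter P lt a y) x
  | OL f => fun x => exists k, P_iter P lt (f k) x
  end.

Definition Pbar_iter (T : Type) (P : T -> Prop) (lt : T -> T -> Prop)
  (o : bord) : T -> Prop := fun x => P x /\ ~ P_iter P lt o x.

Definition is_CB_rank_poset (T : Type) (P : T -> Prop) (lt : T -> T -> Prop)
    (o : bord) : Prop :=
  Pbar_iter P lt o = Pbar_iter P lt (OS o) /\
  forall o', Pbar_iter P lt o' = Pbar_iter P lt (OS o') -> ole o o'.

Definition Qset : nat * nat -> Prop := fun x => (0 < x.1)%N.
Definition Qlt (x y : nat * nat) : Prop :=
  (x.1 %| y.1)%N /\ (x.1 * x.2 < y.1 * y.2)%N.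

(* Main.v *)
Require Import Defs.
From HB Require Import structures.
From mathcomp Require Import all_boot all_order all_algebra.
From mathcomp Require Import zify ring lra.
From Stdlib Require Import ClassicalEpsilon FunctionalExtensionality PropExtensionality Classical.
From Stdlib Require List.
Set Implicit Arguments. Unset Strict Implicit. Unset Printing Implicit Defensive.

Fixpoint fin (m : nat) : bord := match m with 0 => OZ | S m => OS (fin m) end.
Definition omega := OL fin.

Lemma ole_lim a f k : ole a (f k) -> ole a (OL f).
Proof.
elim: a => [|a IH|g IH] H.
- exact: oleZ.
- inversion H; subst. apply: oleS. apply: oltL; eassumption.
- inversion H; subst. apply: oleL => j. exact: IH.
Qed.

Lemma ole_aux x : (forall y, ole x y -> ole x (OS y)) /\ (forall y, olt x y -> ole x y).
Proof.
elim: x => [|a IH|g IH].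
- split=> y _; exact: oleZ.
- have P1 : forall y, ole (OS a) y -> ole (OS a) (OS y).
    move=> y H; inversion H; subst. apply: oleS; apply: oltS. exact: (proj2 IH).
  split=> //. elim=> [|b IHb|f IHf] H; inversion H; subst.
  + exact: P1.
  + apply: ole_lim. apply: IHf; eassumption.
- have P1 : forall y, ole (OL g) y -> ole (OL g) (OS y).
    move=> y H; inversion H; subst. apply: oleL => k. exact: (proj1 (IH k)).
  split=> //. elim=> [|b IHb|f IHf] H; inversion H; subst.
  + exact: P1.
  + apply: ole_lim. apply: IHf; eassumption.
Qed.

Lemma ole_S x y : ole x y -> ole x (OS y).
Proof. exact: (proj1 (ole_aux x)). Qed.
Lemma olt_ole x y : olt x y -> ole x y.
Proof. exact: (proj2 (ole_aux x)). Qed.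

Lemma ole_fin_le j m x : (j <= m)%N -> ole (fin m) x -> ole (fin j) x.
Proof.
elim: m => [|m IH] hj H.
- by move: hj; rewrite leqn0 => /eqP ->.
- case: (ltngtP j m.+1) hj => // [hj' _|-> //].
  apply: IH => //. inversion H; subst. exact: olt_ole.
Qed.

Lemma ole_fin_S m a : ole (fin m) a -> ole (fin m.+1) (OS a).
Proof. by move=> H; apply: oleS; apply: oltS. Qed.

Definition pb (P : Prop) : bool :=
  if excluded_middle_informative P then true else false.
Lemma pbP (P : Prop) : reflect P (pb P).
Proof. rewrite /pb; case: excluded_middle_informative => h; by constructor. Qed.

Lemma predext (U : Type) (A B : U -> Prop) : (forall x, A x <-> B x) -> A = B.
Proof. move=> h; apply: functional_extensionality => x; exact: propositional_extensionality. Qed.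

Section Gen.
Variable U : Type.
Variable iter : bord -> U -> Prop.
Variable step : (U -> Prop) -> (U -> Prop).
Hypothesis hS : forall a, iter (OS a) = step (iter a).
Hypothesis hL : forall f x, iter (OL f) x <-> forall k, iter (f k) x.
Hypothesis hsub : forall X x, step X x -> X x.
Hypothesis htop : step (iter omega) = iter omega.
Hypothesis hstrict : forall m, iter (fin m) <> iter (fin m.+1).

Lemma g_mono j k x : (j <= k)%N -> iter (fin k) x -> iter (fin j) x.
Proof.
elim: k => [|k IH] hj H.
- by move: hj; rewrite leqn0 => /eqP ->.
- case: (ltngtP j k.+1) hj => // [hj' _|-> //].
  apply: IH => //. move: H => /=; rewrite hS. exact: hsub.
Qed.

Lemma g_top k x : iter omega x -> iter (fin k) x.
Proof. by move/hL. Qed.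

Lemma g_inj j k : iter (fin j) = iter (fin k) -> j = k.
Proof.
wlog hjk : j k / (j <= k)%N.
  move=> W h; case: (leqP j k) => h'; first exact: W.
  symmetry; apply: W; [exact: ltnW | by []].
move=> h; case: (ltngtP j k) hjk => // hlt _.
case: (hstrict (m:=j)); apply: predext => x; split.
- move=> hx. have : iter (fin k) x by rewrite -h. exact: g_mono.
- move=> hx. move: hx => /=. rewrite hS. exact: hsub.
Qed.

Definition Ccl o := (exists m, iter o = iter (fin m) /\ ole (fin m) o) \/
                    (iter o = iter omega /\ ole omega o).

Lemma g_class o : Ccl o.
Proof.
elim: o => [|a IH|f IH].
- left; exists 0%N; split=> //; exact: oleZ.
- case: IH => [[m [h1 h2]]|[h1 h2]].
  + left; exists m.+1; split; last exact: ole_fin_S.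
    by rewrite hS h1 -hS.
  + right; split; last exact: ole_S. by rewrite hS h1 htop.
- case: (classic (exists k, iter (f k) = iter omega /\ ole omega (f k))) =>
    [[k [h1 h2]]|hn].
  + right; split; last exact: ole_lim h2.
    apply: predext => x; split.
    * by move/hL/(_ k); rewrite h1.
    * move=> hx; apply/hL => j. case: (IH j) => [[m [e _]]|[e _]]; rewrite e //.
      exact: g_top.
  + have hall : forall k, exists m, iter (f k) = iter (fin m) /\ ole (fin m) (f k).
      move=> k; case: (IH k) => // h; exfalso; apply: hn; by exists k.
    pose Sk m := exists k, iter (f k) = iter (fin m) /\ ole (fin m) (f k).
    case: (classic (exists B, forall m, Sk m -> (m <= B)%N)) => [[B hB]|hunb].
    * have ex0 : exists m, pb (Sk m).
        case: (hall 0%N) => m hm; exists m; apply/pbP; by exists 0%N.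
      have hB' : forall m, pb (Sk m) -> (m <= B)%N by move=> m /pbP; exact: hB.
      case: (ex_maxnP ex0 hB') => m0 /pbP [k0 [e0 o0]] hmax.
      left; exists m0; split; last exact: ole_lim o0.
      apply: predext => x; split.
      -- by move/hL/(_ k0); rewrite e0.
      -- move=> hx; apply/hL => k. case: (hall k) => m [e o]; rewrite e.
         apply: (g_mono (k:=m0)) => //. apply: hmax; apply/pbP; by exists k.
    * right; split.
      -- apply: predext => x; split.
         ++ move=> hx; apply/hL => j.
            have [m [hm [k [e o]]]] : exists m, (j <= m)%N /\ Sk m.
              apply: NNPP => hc; apply: hunb; exists j => m hm.
              case: (leqP m j) => // hlt; exfalso; apply: hc; exists m.
              by split=> //; exact: ltnW.
            move/hL: hx => /(_ k); rewrite e. exact: g_mono.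
         ++ move=> hx; apply/hL => k. case: (hall k) => m [e o]; rewrite e.
            exact: g_top.
      -- apply: oleL => j.
         have [m [hm [k [e o]]]] : exists m, (j <= m)%N /\ Sk m.
           apply: NNPP => hc; apply: hunb; exists j => m hm.
           case: (leqP m j) => // hlt; exfalso; apply: hc; exists m.
           by split=> //; exact: ltnW.
         apply: (ole_lim (k := k)). exact: ole_fin_le o.
Qed.

Lemma g_rank : iter omega = iter (OS omega) /\
  forall o', iter o' = iter (OS o') -> ole omega o'.
Proof.
split; first by rewrite hS htop.
move=> o' h. case: (g_class o') => [[m [e _]]|[_ o]] //.
exfalso; apply: (hstrict (m:=m)). by rewrite -e h hS e -hS.
Qed.
End Gen.

Definition Qv (x : nat * nat) := (x.1 * x.2)%N.

Lemma Pbar_S a : Pbar_iter Qset Qlt (OS a) =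
  (fun x => Pbar_iter Qset Qlt a x /\ ~ minimal_in Qlt (Pbar_iter Qset Qlt a) x).
Proof.
apply: predext => x; rewrite /Pbar_iter /=; split.
- move=> [h1 h2]; split; first (split=> //; by move=> h; apply: h2; left).
  by move=> h; apply: h2; right.
- move=> [[h1 h2] h3]; split=> // [[h|h]] //.
Qed.

Lemma Pbar_L f x : Pbar_iter Qset Qlt (OL f) x <-> forall k, Pbar_iter Qset Qlt (f k) x.
Proof.
rewrite /Pbar_iter /=; split.
- move=> [h1 h2] k; split=> // h; apply: h2; by exists k.
- move=> h; split; first exact: (proj1 (h 0%N)).
  move=> [k hk]; exact: (proj2 (h k)).
Qed.

Lemma Pbar_fin m x : Pbar_iter Qset Qlt (fin m) x <-> (Qset x /\ (m < Qv x)%N).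
Proof.
elim: m x => [|m IH] x.
- rewrite /Pbar_iter /= /minimal_in /Qset /Qlt /Qv; split.
  + move=> [h1 h2]; split=> //. rewrite lt0n; apply/negP => /eqP h0.
    apply: h2; split=> // [[y [_ [_ hy]]]]. by rewrite h0 in hy.
  + move=> [h1 h2]; split=> // [[_ h]]; apply: h; exists (1, 0)%N.
    by rewrite /= dvd1n mul1n.
- rewrite Pbar_S; split.
  + move=> [/IH [h1 h2] h3]; split=> //. rewrite ltn_neqAle h2 andbT.
    apply/negP=> /eqP he; apply: h3; split; first exact/IH.
    move=> [y [/IH [_ hy] [_ hy2]]]. rewrite /Qv in hy he. lia.
  + move=> [h1 h2]; split; first (apply/IH; split=> //; exact: ltnW).
    move=> [_ h]; apply: h; exists (1, m.+1)%N; split.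
    * apply/IH; split; [by []| by rewrite /Qv /= mul1n].
    * rewrite /Qlt /= dvd1n mul1n; split=> //.
Qed.

Lemma poset_rank : is_CB_rank_poset Qset Qlt omega.
Proof.
have hsub : forall (X : nat * nat -> Prop) x,
  (fun x => X x /\ ~ minimal_in Qlt X x) x -> X x by move=> X x [].
have htop : Pbar_iter Qset Qlt omega = (fun _ => False).
  apply: predext => x; split=> // /Pbar_L h.
  have /Pbar_fin [_ hh] := h (Qv x). by rewrite ltnn in hh.
have := @g_rank _ (Pbar_iter Qset Qlt)
  (fun X x => X x /\ ~ minimal_in Qlt X x) Pbar_S Pbar_L hsub.
case.
- rewrite htop; apply: predext => x; split=> //; by case.
- move=> m e. have : Pbar_iter Qset Qlt (fin m) (1, m.+1)%N.
    apply/Pbar_fin; split=> //; by rewrite /Qv /= mul1n.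
  rewrite e => /Pbar_fin [_]. by rewrite /Qv /= mul1n ltnn.
- move=> h1 h2; split=> //.
Qed.

Import GRing.Theory Num.Theory Order.TTheory.
Local Open Scope ring_scope.

Section Lamp.
Variables p n : nat.
Local Notation V := 'rV['F_p]_n.
Local Notation A := (int -> V).
Local Notation L := (lamp p n).

Definition sh (e : int) (f : A) : A := fun k => f (k - e).
Definition fsupp (f : A) := exists N : nat, forall k : int, (N < `|k|)%N -> f k = 0.

Lemma lamp_ext (x y : L) : (forall k, x.1 k = y.1 k) -> x.2 = y.2 -> x = y.
Proof.
case: x => f a; case: y => g b /= h ->; congr pair; exact: functional_extensionality.
Qed.

Lemma lmulA (x y z : L) : lmul (lmul x y) z = lmul x (lmul y z).
Proof.
apply: lamp_ext => [k|] /=; last by rewrite addrA.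
by rewrite addrA opprD addrA.
Qed.

Lemma lmul1x (x : L) : lmul (lone p n) x = x.
Proof. by apply: lamp_ext => [k|] /=; rewrite ?add0r ?subr0. Qed.

Lemma lmulx1 (x : L) : lmul x (lone p n) = x.
Proof. by apply: lamp_ext => [k|] /=; rewrite ?addr0. Qed.

Lemma lmulV (x : L) : lmul x (linv x) = lone p n.
Proof. by apply: lamp_ext => [k|] /=; rewrite ?subrK ?subrr. Qed.

Lemma lmulVx (x : L) : lmul (linv x) x = lone p n.
Proof. by apply: lamp_ext => [k|] /=; rewrite ?opprK ?addNr // addrC subrr. Qed.

Lemma sh_sh (a b : int) (f : A) : sh a (sh b f) = sh (a + b) f.
Proof. apply: functional_extensionality => k; rewrite /sh; congr f; lia. Qed.

Lemma sh0 (f : A) : sh 0 f = f.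
Proof. apply: functional_extensionality => k; by rewrite /sh subr0. Qed.

Lemma fsupp_add (f g : A) : fsupp f -> fsupp g -> fsupp (fun k => f k + g k).
Proof.
move=> [N hN] [M hM]; exists (maxn N M) => k hk.
rewrite hN ?hM ?addr0 //; [exact: leq_ltn_trans (leq_maxr _ _) hk|
  exact: leq_ltn_trans (leq_maxl _ _) hk].
Qed.

Lemma fsupp_opp (f : A) : fsupp f -> fsupp (fun k => - f k).
Proof. by move=> [N hN]; exists N => k hk; rewrite hN ?oppr0. Qed.

Lemma fsupp_sh t (f : A) : fsupp f -> fsupp (sh t f).
Proof.
move=> [N hN]; exists (N + `|t|)%N => k hk; rewrite /sh hN //. lia.
Qed.

Lemma fsupp0 : fsupp (fun _ : int => (0 : V)). Proof. by exists 0%N. Qed.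


Section SG.
Variable H : L -> Prop.
Hypothesis hH : is_subgroup H.

Lemma sg_inL x : H x -> inL x. Proof. by case: hH => h _; apply: h. Qed.
Lemma sg_one : H (lone p n). Proof. by case: hH => _ []. Qed.
Lemma sg_mul x y : H x -> H y -> H (lmul x y). Proof. by case: hH => _ [_ []] h _; apply: h. Qed.
Lemma sg_inv x : H x -> H (linv x). Proof. by case: hH => _ [_ [_ h]]; apply: h. Qed.

Lemma sg_invE x : H (linv x) -> H x.
Proof.
move=> h; have := sg_inv h. have -> // : linv (linv x) = x.
by apply: lamp_ext => [k|] /=; rewrite ?opprK // subrK.
Qed.
End SG.

Definition gpow (a : L) (q : int) : L :=
  match q with
  | Posz m => iter m (lmul a) (lone p n)
  | Negz m => iter m.+1 (lmul (linv a)) (lone p n)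
  end.

Lemma gpow2 a q : (gpow a q).2 = q * a.2.
Proof.
case: q => m /=.
- elim: m => [|m IH] /=; first by rewrite mul0r.
  by rewrite IH -[m.+1]addn1 PoszD mulrDl mul1r addrC.
- elim: m => [|m IH] /=; first by rewrite addr0 NegzE mulN1r.
  rewrite IH !NegzE.
  rewrite -[m.+2]addn1 PoszD opprD mulrDl mulN1r addrC //.
Qed.

Lemma sg_gpow H a q : is_subgroup H -> H a -> H (gpow a q).
Proof.
move=> hH ha; case: q => m /=.
- elim: m => [|m IH] /=; [exact: (sg_one hH) | exact: (sg_mul hH)].
- elim: m => [|m IH] /=.
  + apply: (sg_mul hH); [exact: (sg_inv hH)|exact: (sg_one hH)].
  + apply: (sg_mul hH) => //; exact: (sg_inv hH).
Qed.
End Lamp.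

Section Perf.
Variables p n : nat.
Hypothesis hn : (1 <= n)%N.
Local Notation V := 'rV['F_p]_n.
Local Notation A := (int -> V).
Local Notation L := (lamp p n).

Definition cbX (o : bord) := cb_iter (@inL p n) (@is_subgroup p n) o.
Definition Yset (H : L -> Prop) := is_subgroup H /\ forall x, H x -> x.2 = 0.

Lemma list_bound (F : list L) : (forall g, List.In g F -> inL g) ->
  exists B : nat, forall g, List.In g F -> forall k : int, (B < `|k|)%N -> g.1 k = 0.
Proof.
elim: F => [|a F IH] h; first by exists 0%N.
have [B hB] : exists B : nat, forall g, List.In g F -> forall k : int, (B < `|k|)%N -> g.1 k = 0.
  apply: IH => g hg; apply: h; by right.
have [N hN] := h a (or_introl erefl).
exists (maxn B N) => g [<-|hg] k hk.
- apply: hN. exact: leq_ltn_trans (leq_maxr _ _) hk.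
- apply: hB => //. exact: leq_ltn_trans (leq_maxl _ _) hk.
Qed.

Definition e1 : V := const_mx 1.

Lemma scale_e1_eq0 (c : 'F_p) : c *: e1 = 0 -> c = 0.
Proof.
move=> h. have := congr1 (fun M : V => M ord0 (Ordinal hn)) h.
by rewrite !mxE mulr1.
Qed.

Lemma e1_neq0 : e1 != 0.
Proof. apply/eqP => h. have : (1 : 'F_p) *: e1 = 0 by rewrite scale1r. 
move/scale_e1_eq0 => /eqP. by rewrite oner_eq0. Qed.

Lemma Y_perfect H (F : list L) : Yset H -> (forall g, List.In g F -> inL g) ->
  exists K, Yset K /\ K <> H /\ forall g, List.In g F -> (K g <-> H g).
Proof.
move=> [hH hY] hF. have [B hB] := list_bound hF.
case: (classic (exists f, H (f, 0) /\ exists k : int, (B < `|k|)%N /\ f k <> 0))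
  => [[f [hf [k0 [hk0 hfk0]]]]|hno].
- exists (fun x => H x /\ forall k : int, (B < `|k|)%N -> x.1 k = 0).
  split; [split; [split|]|split].
  + by move=> x [hx _]; apply: (sg_inL hH).
  + split; first by split; [exact: (sg_one hH)|].
    split.
    * move=> x y [hx bx] [hy by_] ; split; first exact: (sg_mul hH).
      move=> k hk /=. rewrite (hY _ hx) subr0 bx // by_ // addr0 //.
    * move=> x [hx bx]; split; first exact: (sg_inv hH).
      move=> k hk /=. by rewrite (hY _ hx) addr0 bx // oppr0.
  + by move=> x [hx _]; apply: hY.
  + move=> e. have : H (f, 0) by []. rewrite -e => [[_ hb]].
    by apply: hfk0; apply: hb.
  + move=> g hg; split; first by case.
    move=> h; split=> //. exact: hB.
- pose a : A := fun k => if k == (B.+1)%:Z then e1 else 0.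
  have hV : forall f k, H (f, 0) -> (B < `|k|)%N -> f k = 0.
    move=> f k hf hk; apply: NNPP => hne; apply: hno; exists f; split=> //.
    by exists k.
  have ha_out : forall k : int, (B.+1 < `|k|)%N -> a k = 0.
    move=> k hk; rewrite /a; case: eqP => // ek; by rewrite ek ltnn in hk.
  exists (fun x => x.2 = 0 /\ exists v (c : 'F_p), H (v, 0) /\ x.1 = (fun k => v k + c *: a k)).
  split; [split; [split|]|split].
  + move=> x [_ [v [c [hv ex]]]]; rewrite /inL ex.
    have [N hN] := sg_inL hH hv.
    exists (maxn N B.+1) => k hk /=.
    have hN' : forall k : int, (N < `|k|)%N -> v k = 0 by exact: hN.
    rewrite (hN' k) ?ha_out ?scaler0 ?addr0 //.
    * exact: leq_ltn_trans (leq_maxr _ _) hk.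
    * exact: leq_ltn_trans (leq_maxl _ _) hk.
  + split; first (split=> //; exists (fun _ => 0), 0; split; [exact: (sg_one hH)|]).
      by apply: functional_extensionality => k; rewrite scale0r addr0.
    split.
    * move=> x y [x2 [v [c [hv ex]]]] [y2 [v' [c' [hv' ey]]]]; split.
        by rewrite /= x2 y2 addr0.
      exists (fun k => v k + v' k), (c + c'); split.
      -- have := sg_mul hH hv hv'. 
         have -> // : lmul (v, 0) (v', 0) = ((fun k => v k + v' k), 0 : int).
         by apply: lamp_ext => [k|] /=; rewrite ?subr0 ?addr0.
      -- apply: functional_extensionality => k /=.
         rewrite x2 subr0 ex ey scalerDl.
         by rewrite addrACA.
    * move=> x [x2 [v [c [hv ex]]]]; split; first by rewrite /= x2 oppr0.
      exists (fun k => - v k), (- c); split.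
      -- have := sg_inv hH hv.
         have -> // : linv (v, 0) = ((fun k => - v k), 0 : int).
         by apply: lamp_ext => [k|] /=; rewrite ?addr0 ?oppr0.
      -- apply: functional_extensionality => k /=.
         by rewrite x2 addr0 ex opprD scaleNr.
  + by move=> x [].
  + move=> e. have hK : H (a, 0).
      rewrite -e. split=> //; exists (fun _ => 0), 1; split; first exact: (sg_one hH).
      by apply: functional_extensionality => k; rewrite scale1r add0r. have := hV a (B.+1)%:Z hK (ltnSn _).
    rewrite /a eqxx => he. by move: e1_neq0; rewrite he eqxx.
  + move=> [g1 g2] hg /=; split.
    * move=> [-> [v [c [hv e]]]].
      have hc : c = 0.
        have h1 := hB _ hg (B.+1)%:Z (ltnSn _).
        have h2 := hV v (B.+1)%:Z hv (ltnSn _).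
        move: h1 => /=; rewrite e h2 add0r /a eqxx. exact: scale_e1_eq0.
      suff -> : g1 = v by [].
      by rewrite e hc; apply: functional_extensionality => k; rewrite scale0r addr0.
    * move=> h; have g20 : g2 = 0 by apply: (hY _ h).
      split=> //; exists g1, 0; split; first by rewrite -g20.
      by apply: functional_extensionality => k; rewrite scale0r addr0.
Qed.

Lemma cbX_sub m H : cbX (fin m) H -> is_subgroup H.
Proof. elim: m H => [|m IH] H //= [h _]; exact: IH. Qed.

Lemma Y_in_cb m H : Yset H -> cbX (fin m) H.
Proof.
elim: m H => [|m IH] H hY; first by case: hY.
split; first exact: IH.
move=> [_ [F [hF hiso]]].
have [K [hK [hne hag]]] := Y_perfect hY hF.
apply: hne; apply: hiso => //; exact: IH.
Qed.

Lemma Y_step : cb_deriv (@inL p n) Yset = Yset.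
Proof.
apply: predext => H; split; first by case.
move=> hY; split=> // [[_ [F [hF hiso]]]].
have [K [hK [hne hag]]] := Y_perfect hY hF.
by apply: hne; apply: hiso.
Qed.
End Perf.

Section Divs.
Variable d : nat.
Hypothesis hd : (0 < d)%N.
Local Notation dZ := (d%:Z).

Lemma dZ_neq0 : dZ != 0. Proof. by rewrite eqz_nat -lt0n. Qed.

Lemma dm_eq (j a : int) : 0 <= a < dZ ->
  ((j * dZ + a) %/ dZ)%Z = j /\ ((j * dZ + a) %% dZ)%Z = a.
Proof.
move=> ha; split.
- rewrite divzMDl ?dZ_neq0 // divz_small ?addr0 //.
- have := modzMDl j a dZ. move=> ->. by rewrite modz_small.
Qed.

Lemma dm_dec (k : int) : k = (k %/ dZ)%Z * dZ + (k %% dZ)%Z /\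
  0 <= (k %% dZ)%Z < dZ.
Proof.
split; first exact: divz_eq.
by rewrite modz_ge0 ?dZ_neq0 // ltz_pmod.
Qed.

Lemma dm_shift (k t : int) : ((k + t * dZ) %/ dZ)%Z = (k %/ dZ)%Z + t /\
  ((k + t * dZ) %% dZ)%Z = (k %% dZ)%Z.
Proof.
have [e r] := dm_dec k.
have := dm_eq ((k %/ dZ)%Z + t) r.
have -> : ((k %/ dZ)%Z + t) * dZ + (k %% dZ)%Z = k + t * dZ.
  by rewrite {3}e mulrDl addrAC.
by [].
Qed.
End Divs.

Section Low.
Variables p n : nat.
Hypothesis hn : (1 <= n)%N.
Local Notation V := 'rV['F_p]_n.
Local Notation A := (int -> V).
Local Notation L := (lamp p n).
Variable d : nat.
Hypothesis hd : (0 < d)%N.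
Local Notation dZ := (d%:Z).

Definition Fam (a : nat) (M : A -> Prop) :=
  M (fun _ => 0) /\
  (forall f g, M f -> M g -> M (fun k => f k + g k)) /\
  (forall f, M f -> M (fun k => - f k)) /\
  (forall f, M f -> M (sh dZ f) /\ M (sh (- dZ) f)) /\
  (forall f, M f -> fsupp f) /\
  (forall f k, M f -> f k <> 0 -> ((k %% dZ)%Z < a%:Z)).

Lemma Fam_shq a M f : Fam a M -> M f -> forall q : int, M (sh (q * dZ) f).
Proof.
move=> [_ [_ [_ [hsh _]]]] hf.
have P : forall m : nat, M (sh (m%:Z * dZ) f) /\ M (sh (- (m%:Z * dZ)) f).
  elim=> [|m [IH1 IH2]]; first by rewrite mul0r oppr0 sh0.
  have e1 : m.+1%:Z * dZ = dZ + m%:Z * dZ by rewrite -addn1 PoszD mulrDl mul1r addrC.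
  rewrite e1 -!sh_sh opprD -sh_sh; split; [exact: (proj1 (hsh _ IH1))|exact: (proj2 (hsh _ IH2))].
case=> m; first exact: (proj1 (P m)).
rewrite NegzE mulNr; exact: (proj2 (P m.+1)).
Qed.

Definition Hgrp (M : A -> Prop) : L -> Prop := fun x => (dZ %| x.2)%Z /\ M x.1.

Lemma Hgrp_sg a M : Fam a M -> is_subgroup (Hgrp M).
Proof.
move=> hF; have [h0 [hadd [hopp [hsh [hfs hres]]]]] := hF.
split; [|split; [|split]].
- move=> x [_ hx]; exact: hfs.
- split=> //; exact: dvdz0.
- move=> x y [/dvdzP [q1 e1] hx] [/dvdzP [q2 e2] hy]; split.
    apply/dvdzP; exists (q1 + q2); by rewrite /= e1 e2 mulrDl.
  apply: hadd => //. have := Fam_shq hF hy q1. by rewrite -e1.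
- move=> x [/dvdzP [q1 e1] hx]; split.
    apply/dvdzP; exists (- q1); by rewrite /= e1 mulNr.
  have := hopp _ (Fam_shq hF hx (- q1)).
  have -> // : (fun k => - sh (- q1 * dZ) x.1 k) = (fun k => - x.1 (k + x.2)).
  apply: functional_extensionality => k; by rewrite /sh e1 mulNr opprK.
Qed.

Section G.
Variables (a N : nat).
Definition Gf (c : A) : A := fun k =>
  if ((k %% dZ)%Z == a%:Z) then c ((k %/ dZ)%Z - N%:Z) - c (k %/ dZ)%Z else 0.

Lemma Gf_add c c' k : Gf (fun j => c j + c' j) k = Gf c k + Gf c' k.
Proof. rewrite /Gf; case: ifP => _; last by rewrite addr0. by rewrite opprD addrACA. Qed.

Lemma Gf_opp c k : Gf (fun j => - c j) k = - Gf c k.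
Proof. rewrite /Gf; case: ifP => _; last by rewrite oppr0. by rewrite opprD. Qed.

Lemma Gf0 k : Gf (fun _ => 0) k = 0.
Proof. rewrite /Gf; case: ifP => _ //; by rewrite subrr. Qed.

Lemma Gf_sh c (t : int) k : Gf c (k + t * dZ) = Gf (sh (- t) c) k.
Proof.
rewrite /Gf /sh. have [e1 e2] := dm_shift hd k t. rewrite e1 e2.
case: ifP => _ //. congr (c _ - c _); lia.
Qed.

Lemma Gf_fsupp c : fsupp c -> fsupp (Gf c).
Proof.
move=> [N0 hN0]; exists ((N0 + N).+1 * d)%N => k hk.
rewrite /Gf; case: ifP => _ //.
have [e r] := dm_dec hd k.
set q := (k %/ dZ)%Z in e *. set rr := (k %% dZ)%Z in e r.
have hq : (N0 + N < `|q|)%N by nia.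
rewrite !hN0 ?subrr //; lia.
Qed.

Definition Mp (M : A -> Prop) : A -> Prop :=
  fun f => exists m c, M m /\ fsupp c /\ f = (fun k => m k + Gf c k).

Lemma Fam_Mp M : (a < d)%N -> Fam a M -> Fam a.+1 (Mp M).
Proof.
move=> had [h0 [hadd [hopp [hsh [hfs hres]]]]].
split; [|split; [|split; [|split; [|split]]]].
- exists (fun _ => 0), (fun _ => 0); split=> //; split; first exact: fsupp0.
  apply: functional_extensionality => k; by rewrite Gf0 addr0.
- move=> f g [m [c [hm [hc ->]]]] [m' [c' [hm' [hc' ->]]]].
  exists (fun k => m k + m' k), (fun k => c k + c' k); split; first exact: hadd.
  split; first exact: fsupp_add.
  apply: functional_extensionality => k; by rewrite Gf_add addrACA.
- move=> f [m [c [hm [hc ->]]]].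
  exists (fun k => - m k), (fun k => - c k); split; first exact: hopp.
  split; first exact: fsupp_opp.
  apply: functional_extensionality => k; by rewrite Gf_opp opprD.
- move=> f [m [c [hm [hc ->]]]]; split.
  + exists (sh dZ m), (sh 1 c); split; first exact: (proj1 (hsh _ hm)).
    split; first exact: fsupp_sh.
    apply: functional_extensionality => k; rewrite /sh.
    have -> : k - dZ = k + (-1) * dZ by rewrite mulN1r.
    by rewrite Gf_sh opprK.
  + exists (sh (- dZ) m), (sh (-1) c); split; first exact: (proj2 (hsh _ hm)).
    split; first exact: fsupp_sh.
    apply: functional_extensionality => k; rewrite /sh.
    have -> : k - - dZ = k + 1 * dZ by rewrite mul1r opprK.
    by rewrite Gf_sh.
- move=> f [m [c [hm [hc ->]]]]. apply: fsupp_add; [exact: hfs|exact: Gf_fsupp].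
- move=> f k [m [c [hm [hc ->]]]] hne.
  case: (eqVneq (m k) 0) => hmk.
  + move: hne; rewrite hmk add0r /Gf; case: ifP => [/eqP -> _|_ //].
    by rewrite ltz_nat ltnS.
  + move: hmk => /eqP hmk. have h := hres _ _ hm hmk.
    apply: lt_trans h _; by rewrite ltz_nat.
Qed.
End G.
End Low.

Section Low2.
Variables p n : nat.
Hypothesis hn : (1 <= n)%N.
Local Notation V := 'rV['F_p]_n.
Local Notation A := (int -> V).
Local Notation L := (lamp p n).
Variable d : nat.
Hypothesis hd : (0 < d)%N.
Local Notation dZ := (d%:Z).

Lemma Gf_zero (a N B : nat) (c : A) : (a < d)%N -> fsupp c ->
  (forall k : int, (B < `|k|)%N -> Gf d a N c k = 0) -> (2 * B < N)%N ->
  forall j, c j = 0.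
Proof.
move=> had [N0 hN0] hG hN.
have key : forall j1 j2, j2 = j1 - N%:Z -> (B < `|(j1 * dZ + a%:Z)%R|)%N -> c j2 = c j1.
  move=> j1 j2 -> hb. have := hG _ hb. rewrite /Gf.
  have [e1 e2] := dm_eq hd j1 (a:=a%:Z) ltac:(apply/andP; split; lia).
  rewrite e1 e2 eqxx. exact: subr0_eq.
move=> j; apply: NNPP => hj.
have hd1 : 1 <= dZ by rewrite lez_nat.
have [hU|hD] : (B%:Z < (j + N%:Z) * dZ + a%:Z) \/ ((j + N%:Z) * dZ + a%:Z <= B%:Z) by lia.
- have P : forall t : nat, c (j + (t%:Z + 1) * N%:Z) = c j.
    elim=> [|t IH].
    + symmetry; apply: key; first lia.
      have hNd : 0 <= N%:Z * dZ by nia.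
      nia.
    + rewrite -IH; symmetry; apply: key; first lia.
      have hNd : 0 <= (t%:Z + 1) * (N%:Z * dZ) by nia.
      have : (j + (t.+1%:Z + 1) * N%:Z) * dZ + a%:Z =
         ((j + N%:Z) * dZ + a%:Z) + (t%:Z + 1) * (N%:Z * dZ).
        rewrite -addn1 PoszD. ring.
      move=> ->. nia.
  apply: hj; rewrite -(P (N0 + `|j|)%N) hN0 //.
  have hN1 : 1 <= N%:Z by lia.
  set t := (N0 + `|j|)%N.
  have : (t%:Z + 1) <= (t%:Z + 1) * N%:Z by nia.
  rewrite /t. lia.
- have P : forall t : nat, c (j - t%:Z * N%:Z) = c j.
    elim=> [|t IH]; first by rewrite mul0r subr0.
    rewrite -IH; apply: key; first (rewrite -addn1 PoszD; ring).
    have hNd : 0 <= t%:Z * (N%:Z * dZ) by nia.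
    have hNd2 : N%:Z <= N%:Z * dZ by nia.
    have : (j - t%:Z * N%:Z) * dZ + a%:Z =
         ((j + N%:Z) * dZ + a%:Z) - N%:Z * dZ - t%:Z * (N%:Z * dZ) by ring.
    move=> ->. lia.
  apply: hj; rewrite -(P (N0 + `|j|).+1%N) hN0 //.
  have hN1 : 1 <= N%:Z by lia.
  set t := (N0 + `|j|).+1%N.
  have : t%:Z <= t%:Z * N%:Z by nia.
  rewrite /t. lia.
Qed.

Lemma lower (j : nat) : forall (a : nat) (M : A -> Prop), (a + j <= d)%N ->
  Fam d a M -> cbX (fin j) (Hgrp d M).
Proof.
elim: j => [|j IH] a M hj hF.
- exact: (Hgrp_sg hF).
- split; first by (apply: IH hF; lia).
  move=> [_ [F [hF' hiso]]].
  have [B hB] := list_bound hF'.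
  set N := (2 * B).+1.
  have had : (a < d)%N by lia.
  have hF2 := Fam_Mp hn hd N had hF.
  have hX : cbX (fin j) (Hgrp d (Mp d a N M)) by apply: IH hF2; lia.
  have [h0 [hadd [hopp [hsh [hfs hres]]]]] := hF.
  have E := hiso _ hX.
  have E2 : Hgrp d (Mp d a N M) = Hgrp d M.
    apply: E => [[g1 g2]] hg; split.
    + move=> [hdv [m [c [hm [hc /= e]]]]]; split=> //.
      have hG : forall k : int, (B < `|k|)%N -> Gf d a N c k = 0.
        move=> k hk.
        have hg1 := hB _ hg k hk. move: hg1 => /=; rewrite e.
        case: (eqVneq (m k) 0) => [hm0|/eqP hmk].
          by rewrite hm0 add0r.
        have := hres _ _ hm hmk. rewrite /Gf; case: ifP => // /eqP ->.
        by rewrite ltxx.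
      have hcz : forall j, c j = 0.
        apply: (Gf_zero had hc hG). rewrite /N; lia.
      suff -> : g1 = m by [].
      rewrite e; apply: functional_extensionality => k.
      by rewrite /Gf !hcz subrr; case: ifP => _; rewrite addr0.
    + move=> [hdv hm]; split=> //; exists g1, (fun _ => 0); split=> //.
      split; first exact: fsupp0.
      apply: functional_extensionality => k. by rewrite Gf0 addr0.
  pose c0 : A := fun j => if j == 0 then e1 p n else 0.
  have hc0 : fsupp c0.
    exists 0%N => k hk; rewrite /c0; case: eqP => // ek; by rewrite ek in hk.
  have hin : Hgrp d (Mp d a N M) (Gf d a N c0, 0).
    split; first exact: dvdz0.
    exists (fun _ => 0), c0; split=> //; split=> //.
    apply: functional_extensionality => k; by rewrite add0r.
  rewrite E2 in hin. case: hin => _ hM.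
  have hv : Gf d a N c0 a%:Z <> 0.
    rewrite /Gf. have := dm_eq hd 0 (a:=a%:Z) ltac:(apply/andP; split; lia).
    rewrite mul0r add0r => [[-> ->]]. rewrite eqxx /c0.
    have -> : (0 - N%:Z == 0) = false by apply/negbTE; lia.
    rewrite eqxx sub0r => /eqP. rewrite oppr_eq0. by apply/negP; exact: e1_neq0.
  have := hres _ _ hM hv.
  have [_ ->] := dm_eq hd 0 (a:=a%:Z) ltac:(apply/andP; split; lia).
  by rewrite ltxx.
Qed.
End Low2.


Lemma chain_stab (T : finType) (S : nat -> {set T}) :
  (forall w, S w \subset S w.+1) -> exists w1, forall w, S w \subset S w1.
Proof.
move=> hm.
have mono : forall w w', (w <= w')%N -> S w \subset S w'.
  move=> w w' /subnK <-; elim: (w' - w)%N => [|k IH]; first by rewrite add0n.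
  apply: subset_trans IH _; rewrite addSn; exact: hm.
have ex0 : exists k, pb (exists w, #|S w| = k) by exists #|S 0%N|; apply/pbP; exists 0%N.
have hb : forall k, pb (exists w, #|S w| = k) -> (k <= #|T|)%N.
  move=> k /pbP [w <-]; exact: max_card.
case: (ex_maxnP ex0 hb) => k /pbP [w1 e1] hmax.
exists w1 => w; apply: subset_trans (mono w (maxn w w1) (leq_maxl _ _)) _.
have hs : S w1 \subset S (maxn w w1) by apply: mono; exact: leq_maxr.
have hc : (#|S (maxn w w1)| <= #|S w1|)%N.
  rewrite e1; apply: hmax; apply/pbP; by exists (maxn w w1).
have e : S w1 = S (maxn w w1) by apply/eqP; rewrite eqEcard hs hc.
by rewrite -e.
Qed.

Section Up.
Variables p n : nat.
Hypothesis hn : (1 <= n)%N.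
Local Notation V := 'rV['F_p]_n.
Local Notation A := (int -> V).
Local Notation L := (lamp p n).

Definition wsupp (lo hi : int) (f : A) := forall k, (k < lo) || (hi <= k) -> f k = 0.
Definition Blk (d : nat) := {ffun 'I_d -> V}.
Definition topb (d w : nat) (f : A) : Blk d :=
  [ffun i : 'I_d => f ((w%:Z - 1) * d%:Z + (i : nat)%:Z)].
Definition Dset (d : nat) (M : A -> Prop) (w : nat) : {set Blk d} :=
  [set v | pb (exists f, M f /\ wsupp 0 (w * d)%N%:Z f /\ topb d w f = v)].

Lemma DsetP d M w v : v \in Dset d M w <->
  exists f, M f /\ wsupp 0 (w * d)%N%:Z f /\ topb d w f = v.
Proof. rewrite inE; split; by move/pbP. Qed.

Definition MH (H : L -> Prop) : A -> Prop := fun f => H (f, 0).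

Definition zcl (M : A -> Prop) := M (fun _ => 0) /\
  (forall f g, M f -> M g -> M (fun k => f k + g k)) /\
  (forall f, M f -> M (fun k => - f k)).
Definition shcl (d : nat) (M : A -> Prop) :=
  forall f, M f -> M (sh d%:Z f) /\ M (sh (- d%:Z) f).

Lemma MH_zcl H : is_subgroup H -> zcl (MH H).
Proof.
move=> hH; split; [|split].
- exact: (sg_one hH).
- move=> f g hf hg; have := sg_mul hH hf hg.
  have -> // : lmul (f, 0) (g, 0) = ((fun k => f k + g k), 0 : int).
  by apply: lamp_ext => [k|] /=; rewrite ?subr0 ?addr0.
- move=> f hf; have := sg_inv hH hf.
  have -> // : linv (f, 0) = ((fun k => - f k), 0 : int).
  by apply: lamp_ext => [k|] /=; rewrite ?addr0 ?oppr0.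
Qed.

Lemma MH_shcl H (d : nat) g : is_subgroup H -> H (g, d%:Z) -> shcl d (MH H).
Proof.
move=> hH hg f hf; split.
- have := sg_mul hH (sg_mul hH hg hf) (sg_inv hH hg).
  have -> // : lmul (lmul (g, d%:Z) (f, 0)) (linv (g, d%:Z)) = (sh d%:Z f, 0).
  apply: lamp_ext => [k|] /=; last by rewrite addr0 subrr.
  rewrite /sh addr0 subrK. by rewrite addrAC subrr add0r.
- have := sg_mul hH (sg_mul hH (sg_inv hH hg) hf) hg.
  have -> // : lmul (lmul (linv (g, d%:Z)) (f, 0)) (g, d%:Z) = (sh (- d%:Z) f, 0).
  apply: lamp_ext => [k|] /=; last by rewrite addr0 addNr.
  rewrite /sh addr0 opprK [- _ + _]addrC -addrA addNr addr0 //.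
Qed.

Lemma shcl_n d M : shcl d M -> forall t : nat, forall f, M f ->
  M (sh (t%:Z * d%:Z) f) /\ M (sh (- (t%:Z * d%:Z)) f).
Proof.
move=> hs; elim=> [|t IH] f hf; first by rewrite mul0r oppr0 sh0.
have e1 : t.+1%:Z * d%:Z = d%:Z + t%:Z * d%:Z by rewrite -addn1 PoszD mulrDl mul1r addrC.
have [h1 h2] := IH f hf.
rewrite e1 -!sh_sh opprD -sh_sh; split; [exact: (proj1 (hs _ h1))|exact: (proj2 (hs _ h2))].
Qed.

Lemma Dset_mono d M w : zcl M -> shcl d M -> Dset d M w \subset Dset d M w.+1.
Proof.
move=> hz hs; apply/subsetP => v /DsetP [f [hf [hw e]]].
apply/DsetP; exists (sh d%:Z f); split; first exact: (proj1 (hs _ hf)).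
split.
- move=> k hk; rewrite /sh; apply: hw. move: hk; lia.
- rewrite -e; apply/ffunP => i; rewrite !ffunE /sh; congr f. lia.
Qed.

Lemma Dset_monoM d (M M' : A -> Prop) w : (forall f, M f -> M' f) ->
  Dset d M w \subset Dset d M' w.
Proof.
move=> h; apply/subsetP => v /DsetP [f [hf [hw e]]]; apply/DsetP; exists f; split=> //.
exact: h.
Qed.

Definition tbdata (H : L -> Prop) (d : nat) (g : A) (w1 : nat) :=
  [/\ (0 < d)%N, H (g, d%:Z), (forall x, H x -> (d%:Z %| x.2)%Z) &
      forall w, Dset d (MH H) w \subset Dset d (MH H) w1].

Definition mu (H : L -> Prop) (d w1 : nat) :=
  (d * (#|Blk d| + 1) + (#|Blk d| - #|Dset d (MH H) w1|))%N.

Lemma gpow_d (g : A) (d : nat) q : (gpow (g, d%:Z) q).2 = q * d%:Z.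
Proof. by rewrite gpow2. Qed.

Lemma exists_data H : is_subgroup H -> (exists x, H x /\ x.2 <> 0) ->
  exists d g w1, tbdata H d g w1.
Proof.
move=> hH [x0 [hx0 hne]].
have [x1 [hx1 hpos]] : exists x1, H x1 /\ 0 < x1.2.
  case: (ltrgt0P x0.2) => h; [by exists x0| |by []].
  exists (linv x0); split; first exact: (sg_inv hH). rewrite /= oppr_gt0 //.
pose P m := pb ((0 < m)%N /\ exists f, H (f, m%:Z)).
have ex0 : exists m, P m.
  exists `|x1.2|%N; apply/pbP; split; first by lia.
  exists x1.1; have -> : (`|x1.2|%N)%:Z = x1.2 by lia.
  by case: x1 hx1 hpos.
case: (ex_minnP ex0) => d /pbP [hd [g hg]] hmin.
have hmul : forall x, H x -> (d%:Z %| x.2)%Z.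
  move=> x hx. apply/dvdz_mod0P.
  have [e /andP [r1 r2]] := dm_dec hd x.2.
  set q := (x.2 %/ d%:Z)%Z in e. set r := (x.2 %% d%:Z)%Z in e r1 r2 *.
  have hy : H (lmul x (linv (gpow (g, d%:Z) q))).
    apply: (sg_mul hH hx); apply: (sg_inv hH); exact: sg_gpow.
  have hy2 : (lmul x (linv (gpow (g, d%:Z) q))).2 = r.
    rewrite /= gpow_d. lia.
  apply: NNPP => hr.
  have : (d <= `|r|)%N.
    apply: hmin; apply/pbP; split; first by lia.
    exists (lmul x (linv (gpow (g, d%:Z) q))).1.
    have -> : (`|r|%N)%:Z = r by lia.
    by rewrite -hy2; case: (lmul _ _) hy.
  lia.
have hz := MH_zcl hH. have hs := MH_shcl hH hg.
have [w1 hw1] := chain_stab (fun w => Dset_mono w hz hs).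
exists d, g, w1; split=> //.
Qed.

Lemma wsupp_weak lo hi hi' f : hi <= hi' -> wsupp lo hi f -> wsupp lo hi' f.
Proof. move=> hh hw k hk; apply: hw; move: hk; lia. Qed.

Lemma wsupp0 (f : A) (hi : int) : wsupp 0 0 f -> wsupp 0 hi f.
Proof. move=> hw k _; apply: hw; lia. Qed.

Lemma peel (d w w1 : nat) (f y : A) : (0 < d)%N -> (w1 <= w.+1)%N ->
  wsupp 0 (w.+1 * d)%N%:Z f -> wsupp 0 (w1 * d)%N%:Z y ->
  topb d w.+1 f = topb d w1 y ->
  wsupp 0 (w.+1 * d)%N%:Z (sh ((w.+1 - w1)%N%:Z * d%:Z) y) /\
  wsupp 0 (w * d)%N%:Z (fun k => f k - sh ((w.+1 - w1)%N%:Z * d%:Z) y k).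
Proof.
move=> hd hw1 hf hy e.
have hy' : wsupp 0 (w.+1 * d)%N%:Z (sh ((w.+1 - w1)%N%:Z * d%:Z) y).
  move=> k hk; rewrite /sh; apply: hy. move: hk.
  have : ((w.+1 - w1)%N%:Z * d%:Z) = (w.+1%:Z - w1%:Z) * d%:Z by nia.
  move=> ->. nia.
split=> // k hk.
case: (boolP ((k < 0) || ((w.+1 * d)%N%:Z <= k))) => hout.
  by rewrite hf // hy' // subrr.
have hi : (`|k - (w * d)%N%:Z| < d)%N by move: hk hout; nia.
have := congr1 (fun F : Blk d => F (Ordinal hi)) e.
rewrite !ffunE /= => e2.
have ek : k = (w.+1%:Z - 1) * d%:Z + (`|k - (w * d)%N%:Z|%N)%:Z by move: hk hout; nia.
rewrite /sh {1}ek e2. apply/eqP; rewrite subr_eq0; apply/eqP; congr y.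
move: hk hout; nia.
Qed.

Lemma to_window (d : nat) (f : A) : (0 < d)%N -> fsupp f ->
  exists t w : nat, wsupp 0 (w * d)%N%:Z (sh (t%:Z * d%:Z) f).
Proof.
move=> hd [N hN]; exists N.+1, (N.+1 + N.+1)%N => k hk; rewrite /sh; apply: hN.
have h1 : N.+1%:Z <= N.+1%:Z * d%:Z by nia.
move: hk; nia.
Qed.

Lemma gen_lemma (d : nat) (M M' : A -> Prop) (w1 : nat) : (0 < d)%N ->
  zcl M -> shcl d M -> (forall f, M f -> fsupp f) ->
  (forall w, Dset d M w \subset Dset d M w1) ->
  zcl M' -> shcl d M' -> (forall f, M f -> wsupp 0 (w1 * d)%N%:Z f -> M' f) ->
  forall f, M f -> M' f.
Proof.
move=> hd [h0 [hadd hopp]] hs hfs hstab [h0' [hadd' hopp']] hs' hwin.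
have core : forall w f, M f -> wsupp 0 (w * d)%N%:Z f -> M' f.
  elim=> [|w IH] f hf hw.
    by apply: hwin => //; apply: wsupp0.
  case: (leqP w.+1 w1) => hle.
    apply: hwin => //; apply: wsupp_weak hw; nia.
  have : topb d w.+1 f \in Dset d M w1.
    apply: (subsetP (hstab w.+1)); apply/DsetP; by exists f.
  move=> /DsetP [y [hy [hyw ey]]].
  have hle' : (w1 <= w.+1)%N by lia.
  have [hy'w hdw] := peel hd hle' hw hyw (esym ey).
  set y' := sh _ y in hy'w hdw.
  have hMy' : M y' by exact: (proj1 (shcl_n hs _ hy)).
  have hM'y' : M' y' by apply: (proj1 (shcl_n hs' _ _)); apply: hwin.
  have hdiff : M' (fun k => f k - y' k).
    apply: IH => //. apply: hadd => //; exact: hopp.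
  have -> : f = (fun k => (f k - y' k) + y' k).
    by apply: functional_extensionality => k; rewrite subrK.
  exact: hadd'.
move=> f hf. have [t [w hw]] := to_window hd (hfs _ hf).
have := core _ _ (proj1 (shcl_n hs t hf)) hw.
move=> /(shcl_n hs' t) [_]. by rewrite sh_sh addrC subrr sh0.
Qed.

Lemma reduce_lemma (d : nat) (M M' : A -> Prop) (w1 : nat) : (0 < d)%N ->
  zcl M -> shcl d M -> zcl M' -> shcl d M' -> (forall f, M' f -> fsupp f) ->
  (forall f, M f -> M' f) ->
  (forall w, Dset d M' w \subset Dset d M w1) ->
  forall f, M' f -> ~ M f -> exists f', M' f' /\ ~ M f' /\ wsupp 0 (w1 * d)%N%:Z f'.
Proof.
move=> hd [h0 [hadd hopp]] hs [h0' [hadd' hopp']] hs' hfs' hsub hstab.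
have core : forall w f, M' f -> ~ M f -> wsupp 0 (w * d)%N%:Z f ->
    exists f', M' f' /\ ~ M f' /\ wsupp 0 (w1 * d)%N%:Z f'.
  elim=> [|w IH] f hf hnf hw.
    by exists f; split=> //; split=> //; apply: wsupp0.
  case: (leqP w.+1 w1) => hle.
    exists f; split=> //; split=> //; apply: wsupp_weak hw; nia.
  have : topb d w.+1 f \in Dset d M w1.
    apply: (subsetP (hstab w.+1)); apply/DsetP; by exists f.
  move=> /DsetP [y [hy [hyw ey]]].
  have hle' : (w1 <= w.+1)%N by lia.
  have [hy'w hdw] := peel hd hle' hw hyw (esym ey).
  set y' := sh _ y in hy'w hdw.
  have hMy' : M y' by exact: (proj1 (shcl_n hs _ hy)).
  apply: (IH (fun k => f k - y' k)) => //.
  - apply: hadd' => //; apply: hopp'; exact: hsub.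
  - move=> hM; apply: hnf.
    have -> : f = (fun k => (f k - y' k) + y' k).
      by apply: functional_extensionality => k; rewrite subrK.
    exact: hadd.
move=> f hf hnf. have [t [w hw]] := to_window hd (hfs' _ hf).
apply: (core _ _ (proj1 (shcl_n hs' t hf))) hw.
move=> /(shcl_n hs t) [_]. rewrite sh_sh addrC subrr sh0. exact: hnf.
Qed.
End Up.

Lemma In_enum (T : finType) (x : T) : List.In x (enum T).
Proof.
have : x \in enum T by rewrite mem_enum.
elim: (enum T) => [|a l IH] /=; first by rewrite in_nil.
rewrite in_cons => /orP [/eqP ->|h]; [by left|right; exact: IH].
Qed.

Section Up2.
Variables p n : nat.
Hypothesis hn : (1 <= n)%N.
Local Notation V := 'rV['F_p]_n.
Local Notation A := (int -> V).
Local Notation L := (lamp p n).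

Definition extv (s : seq V) : A := fun k => if k is Posz m then nth 0 s m else 0.
Definition Fwin (Lw : nat) : list L :=
  List.map (fun t : Lw.-tuple V => (extv t, 0)) (enum {: Lw.-tuple V}).

Lemma win_in (Lw : nat) (f : A) : wsupp 0 Lw%:Z f -> List.In (f, 0) (Fwin Lw).
Proof.
move=> hw.
have hs : size (mkseq (fun m => f m%:Z) Lw) == Lw by rewrite size_mkseq.
pose t := Tuple hs.
have -> : f = extv t.
  apply: functional_extensionality => k; rewrite /extv /=.
  case: k => m.
  - case: (ltnP m Lw) => hm; first by rewrite nth_mkseq.
    rewrite nth_default ?size_mkseq //. apply: hw; apply/orP; right; lia.
  - apply: hw; apply/orP; left; lia.
apply: List.in_map; exact: In_enum.
Qed.

Lemma Fwin_inL Lw g : List.In g (Fwin Lw) -> inL g.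
Proof.
move/List.in_map_iff => [t [<- _]]; exists Lw => k hk /=; rewrite /extv.
case: k hk => // m hm; rewrite nth_default // size_tuple; lia.
Qed.

Lemma grp_det (G : L -> Prop) (d : int) g x : is_subgroup G -> G (g, d) ->
  (d %| x.2)%Z ->
  (G x <-> MH G (lmul x (linv (gpow (g, d) (x.2 %/ d)%Z))).1).
Proof.
move=> hG hg hdv.
set P := gpow (g, d) (x.2 %/ d)%Z.
have hP : G P by exact: sg_gpow.
have ey : lmul x (linv P) = ((lmul x (linv P)).1, 0).
  apply: lamp_ext => // /=. rewrite /P gpow2 /= divzK //. by rewrite subrr.
rewrite /MH -ey; split.
- move=> hx; apply: (sg_mul hG hx); exact: (sg_inv hG).
- move=> hy; have := sg_mul hG hy hP. by rewrite lmulA lmulVx lmulx1.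
Qed.

Definition Fnb (d : nat) (g : A) (w1 : nat) : list L :=
  (g, d%:Z) :: Fwin (w1 * d)%N.

Lemma Fnb_inL H d g w1 : is_subgroup H -> H (g, d%:Z) ->
  forall x, List.In x (Fnb d g w1) -> inL x.
Proof.
move=> hH hg x [<-|hx]; [exact: (sg_inL hH)|exact: Fwin_inL hx].
Qed.

Lemma cardBlk d : #|Blk p n d| = (#|V| ^ d)%N.
Proof. by rewrite /Blk card_ffun card_ord. Qed.

Lemma neighbor H d g w1 K : is_subgroup H -> tbdata H d g w1 -> is_subgroup K ->
  (forall x, List.In x (Fnb d g w1) -> (K x <-> H x)) -> K <> H ->
  exists dK gK w1K, tbdata K dK gK w1K /\ (mu K dK w1K < mu H d w1)%N.
Proof.
move=> hH [hd hg hdiv hstab] hK hag hne.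
have hKg : K (g, d%:Z) by apply/hag; [left|].
have [dK [gK [w1K hKd]]] : exists dK gK w1K, tbdata K dK gK w1K.
  apply: exists_data => //; exists (g, d%:Z); split=> //=.
  apply/eqP; rewrite eqz_nat; lia.
case: (hKd) => hdK hgK hdivK hstabK.
exists dK, gK, w1K; split=> //.
have hdKd : (dK <= d)%N.
  have := hdivK _ hKg. rewrite /= dvdzE /= => /dvdn_leq; apply; exact: hd.
have hzH := MH_zcl hH. have hsH := MH_shcl hH hg.
have hzK := MH_zcl hK. have hsK := MH_shcl hK hKg.
have hfsH : forall f, MH H f -> fsupp f by move=> f hf; exact: (sg_inL hH hf).
have hfsK : forall f, MH K f -> fsupp f by move=> f hf; exact: (sg_inL hK hf).
have hsup : forall f, MH H f -> MH K f.
  apply: (gen_lemma hn hd hzH hsH hfsH hstab hzK hsK) => f hf hw.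
  apply/hag => //; right; exact: win_in.
have hV0 : (0 < #|V|)%N by apply/card_gt0P; exists 0.
case: (ltnP dK d) => hlt.
- rewrite /mu !cardBlk.
  have hB : (#|V| ^ dK <= #|V| ^ d)%N by apply: leq_pexp2l.
  move: (#|V| ^ dK)%N (#|V| ^ d)%N hB => BK B hB.
  nia.
- have edK : dK = d by apply/eqP; rewrite eqn_leq hdKd hlt.
  subst dK.
  case: (classic (exists f, MH K f /\ ~ MH H f)) => [[f0 [hf0K hf0H]]|hnone].
  + rewrite /mu ltn_add2l.
    have hsubD : Dset d (MH H) w1 \subset Dset d (MH K) w1K.
      apply: subset_trans (hstabK w1); exact: Dset_monoM.
    have hcK : (#|Dset d (MH K) w1K| <= #|Blk p n d|)%N by exact: max_card.
    suff : (#|Dset d (MH H) w1| < #|Dset d (MH K) w1K|)%N by lia.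
    rewrite ltnNge; apply/negP => hle.
    have eD : Dset d (MH H) w1 = Dset d (MH K) w1K by apply/eqP; rewrite eqEcard hsubD hle.
    have hst : forall w, Dset d (MH K) w \subset Dset d (MH H) w1 by move=> w; rewrite eD.
    have [f' [h1 [h2 h3]]] := reduce_lemma hn hd hzH hsH hzK hsK hfsK hsup hst hf0K hf0H.
    apply: h2; apply/hag => //; right; exact: win_in.
  + exfalso; apply: hne; apply: predext => x.
    case: (boolP (d%:Z %| x.2)%Z) => hdx; last first.
      split=> h; [by move: (hdivK _ h); rewrite (negbTE hdx)|by move: (hdiv _ h); rewrite (negbTE hdx)].
    rewrite (grp_det hK hKg hdx) (grp_det hH hg hdx); split; last exact: hsup.
    move=> h; apply: NNPP => h'; apply: hnone; by eexists; split; [exact: h|].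
Qed.

Lemma ub (m : nat) : forall (H : L -> Prop) (d : nat) (g : A) (w1 : nat), is_subgroup H -> tbdata H d g w1 ->
  (mu H d w1 <= m)%N -> ~ cbX (fin m.+1) H.
Proof.
elim: m => [|m IH] H d g w1 hH hdat hmu [hX hniso]; apply: hniso; split=> //;
  exists (Fnb d g w1); (split; first by apply: Fnb_inL hH _; case: hdat).
- move=> K hK hag; apply: NNPP => hne.
  have [dK [gK [w1K [hKd hlt]]]] := neighbor hH hdat hK hag hne.
  lia.
- move=> K hK hag; apply: NNPP => hne.
  have [dK [gK [w1K [hKd hlt]]]] := neighbor hH hdat (cbX_sub (m:=m.+1) hK) hag hne.
  apply: (IH K dK gK w1K (cbX_sub (m:=m.+1) hK) hKd) => //. lia.
Qed.

Lemma typeB_fin (H : L -> Prop) : is_subgroup H -> (exists x, H x /\ x.2 <> 0) ->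
  exists k, ~ cbX (fin k) H.
Proof.
move=> hH hx; have [d [g [w1 hdat]]] := exists_data hn hH hx.
exists (mu H d w1).+1; apply: (ub (m := mu H d w1) hH hdat) => //.
Qed.
End Up2.

Section Final.
Variables p n : nat.
Hypothesis hn : (1 <= n)%N.
Local Notation V := 'rV['F_p]_n.
Local Notation A := (int -> V).
Local Notation L := (lamp p n).

Lemma cbX_mono j k (H : L -> Prop) : (j <= k)%N -> cbX (fin k) H -> cbX (fin j) H.
Proof.
elim: k => [|k IH] hj hk.
- by move: hj; rewrite leqn0 => /eqP ->.
- case: (ltngtP j k.+1) hj => // [hj' _|-> //].
  apply: IH => //. by case: hk.
Qed.

Lemma top_eq : cb_iter (@inL p n) (@is_subgroup p n) omega = Yset (n:=n).
Proof.
apply: predext => H; split.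
- move=> hH. have hs : is_subgroup H by exact: (hH 0%N).
  split=> // x hx; apply: NNPP => hne.
  have [k hk] := typeB_fin hn hs (ex_intro _ x (conj hx hne)).
  exact: hk (hH k).
- move=> hY k; exact: Y_in_cb.
Qed.

Definition M0 : A -> Prop := fun f => f = (fun _ => 0).

Lemma Fam0 d : Fam d 0 M0.
Proof.
split; [|split; [|split; [|split; [|split]]]].
- by [].
- move=> f g -> ->; apply: functional_extensionality => k; by rewrite addr0.
- move=> f ->; apply: functional_extensionality => k; by rewrite oppr0.
- by move=> f ->; split.
- move=> f ->; exact: fsupp0.
- by move=> f k ->.
Qed.

Lemma space_rank : is_CB_rank_space (@inL p n) (@is_subgroup p n) omega.
Proof.
have hsub : forall (X : (L -> Prop) -> Prop) x, cb_deriv (@inL p n) X x -> X x.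
  by move=> X x [].
have hL : forall f x, cb_iter (@inL p n) (@is_subgroup p n) (OL f) x <->
    forall k, cb_iter (@inL p n) (@is_subgroup p n) (f k) x by [].
have := @g_rank _ (cb_iter (@inL p n) (@is_subgroup p n)) (cb_deriv (@inL p n))
  (fun a => erefl) hL hsub.
case.
- by rewrite top_eq; exact: Y_step.
- move=> m E.
  have Ej : forall j, @cbX p n (fin (m + j)%N) = @cbX p n (fin m).
    move=> j; elim: j => [|j IH]; first by rewrite addn0.
    rewrite addnS. change (cb_deriv (@inL p n) (@cbX p n (fin (m+j)%N)) = @cbX p n (fin m)).
    rewrite IH. exact: (esym E).
  have hd : (0 < m.+1)%N by [].
  have hX := lower hn hd (a:=0) (M:=M0) (leqnSn m) (Fam0 m.+1).
  have hT : cb_iter (@inL p n) (@is_subgroup p n) omega (Hgrp m.+1 M0).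
    move=> k. case: (leqP k m) => hk.
    + exact: cbX_mono hk hX.
    + have e : k = (m + (k - m))%N by lia.
      rewrite /fin -/fin e. change (@cbX p n (fin (m + (k - m))%N) (Hgrp m.+1 M0)).
      by rewrite Ej.
  rewrite top_eq in hT. case: hT => _ hY.
  have := hY ((fun _ => 0), (m.+1)%:Z) (conj (dvdzz _) erefl). by [].
- by [].
Qed.
End Final.

Theorem theorem6p6 (p n : nat) (hp : prime p) (hn : (1 <= n)%N) :
  exists o : bord,
    is_CB_rank_space (@inL p n) (@is_subgroup p n) o /\
    is_CB_rank_poset Qset Qlt o.
Proof.
exists omega; split; [exact: space_rank | exact: poset_rank].
Qed.
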